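(* Let $z_1,\dots,z_n$ be a stream of elements sampled into a buffer $B$ of size $s$ using the RS-x algorithm (described below). Then at any time $t\ge s+2$, the $s$ elements of the buffer are independent, and each is a uniformly random sample (with replacement) from $\{z_1,\dots,z_{t-1}\}$; i.e. the buffer consists of $s$ i.i.d. samples from $\{z_1,\dots,z_{t-1}\}$.
   Context: RS-x update when the point $z_t$ arrives at step $t$: if $|B|<s$, add $z_t$ to $B$; else if $t=s+1$, replace $B$ by $s$ points sampled uniformly with replacement from $B\cup\{z_t\}$; else (for $t>s+1$) independently replace each of the $s$ buffer entries by $z_t$ with probability $1/t$. The buffer at time $t$ means the buffer after the updates with $z_1,\dots,z_{t-1}$ (before $z_t$ is processed); probabilities are over the randomness of the update rule, for a fixed stream. *)

(* Defs.v *)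
(* Finite discrete distributions are represented as lists of
   weighted outcomes (weight, buffer); probabilities are over the randomness of
   the RS-x update rule for a fixed stream z (z t is the t-th element, t >= 1). *)
From HB Require Import structures.
From mathcomp Require Import all_boot all_order all_algebra.
Set Implicit Arguments. Unset Strict Implicit. Unset Printing Implicit Defensive.
Import Order.TTheory GRing.Theory Num.Theory.
Local Open Scope ring_scope.

Section RSx.
Variables (R : realFieldType) (T : eqType).

Definition dist := seq (R * seq T).

Definition dbind (d : dist) (f : seq T -> dist) : dist :=
  flatten [seq [seq (pb.1 * qc.1, qc.2) | qc <- f pb.2] | pb <- d].

Definition Pr (d : dist) (v : seq T) : R :=
  \sum_(pb <- d | pb.2 == v) pb.1.

Definition rsx_step (s t : nat) (zt : T) (B : seq T) : dist :=
  if (size B < s)%N then [:: (1, rcons B zt)]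
  else if (t == s.+1)%N then
    (* s points sampled uniformly with replacement from B ∪ {zt} (s+1 points) *)
    [seq ((t%:R)^-1 ^+ s, [seq nth zt (rcons B zt) (f i) | i <- enum 'I_s])
    | f : {ffun 'I_s -> 'I_s.+1} <- enum {ffun 'I_s -> 'I_s.+1}]
  else
    (* each entry independently replaced by zt with probability 1/t *)
    [seq (\prod_(i < s) (if m i then (t%:R)^-1 else 1 - (t%:R)^-1),
          [seq (if m i then zt else nth zt B i) | i <- enum 'I_s])
    | m : {ffun 'I_s -> bool} <- enum {ffun 'I_s -> bool}].

Fixpoint rsx_after (s : nat) (z : nat -> T) (m : nat) : dist :=
  match m with
  | 0 => [:: (1, [::])]
  | m'.+1 => dbind (rsx_after s z m') (rsx_step s m'.+1 (z m'.+1))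
  end.

(* the buffer at time t: after the updates with z_1, ..., z_{t-1} *)
Definition rsx_buffer (s : nat) (z : nat -> T) (t : nat) : dist :=
  rsx_after s z t.-1.

End RSx.

(* Main.v *)
Require Import Defs.
From mathcomp Require Import all_boot all_order all_algebra.
From mathcomp Require Import ring zify.
Import Order.TTheory GRing.Theory Num.Theory.
Local Open Scope ring_scope.

Section Proof.
Variables (R : realFieldType) (T : eqType).

Definition Ex (d : dist R T) (g : seq T -> R) : R := \sum_(pb <- d) pb.1 * g pb.2.

Lemma Ex_bind (d : dist R T) (f : seq T -> dist R T) g : Ex (dbind d f) g = Ex d (fun B => Ex (f B) g).
Proof.
rewrite /Ex /dbind big_flatten /= big_map; apply: eq_bigr => pb _.
rewrite big_map mulr_sumr; apply: eq_bigr => qc _; by rewrite mulrA.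
Qed.

Lemma Ex_eq_in d g g' : (forall pb, pb \in d -> g pb.2 = g' pb.2) -> Ex d g = Ex d g'.
Proof.
move=> H; rewrite /Ex big_seq [RHS]big_seq; apply: eq_bigr => pb Hp; by rewrite H.
Qed.

Lemma all_bind (d : dist R T) (f : seq T -> dist R T) (Q : pred (seq T)) :
  (forall pb, pb \in d -> all (fun qc => Q qc.2) (f pb.2)) ->
  all (fun qc => Q qc.2) (dbind d f).
Proof.
elim: d => [//|pb d IH] H; rewrite /dbind /= all_cat; apply/andP; split.
  rewrite all_map; apply/allP => qc Hq /=.
  by move/allP: (H pb (mem_head _ _)) => /(_ qc Hq).
by apply: IH => pb' Hp; apply: H; rewrite inE Hp orbT.
Qed.

Lemma nth_map_enum (s : nat) (x0 : T) (F : 'I_s -> T) (i : 'I_s) :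
  nth x0 [seq F j | j <- enum 'I_s] i = F i.
Proof. by rewrite (nth_map i) ?size_enum_ord ?ltn_ord // nth_ord_enum. Qed.

Lemma size_map_enum (s : nat) (F : 'I_s -> T) : size [seq F j | j <- enum 'I_s] = s.
Proof. by rewrite size_map size_enum_ord. Qed.

Lemma step_size s t (zt : T) (B : seq T) : (size B == s) || ((size B).+1 == s) ->
  all (fun qc => size qc.2 == s) (rsx_step R s t zt B).
Proof.
rewrite /rsx_step; case: ifP => Hs.
  move=> /orP[/eqP E|E]; first by rewrite E ltnn in Hs.
  by rewrite /= size_rcons E.
move=> _; case: ifP => _; apply/allP => qc /mapP[f _ ->] /=; by rewrite size_map_enum.
Qed.

Lemma after_small s (z : nat -> T) m : (m <= s)%N ->
  rsx_after R s z m = [:: (1, [seq z j | j <- iota 1 m])].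
Proof.
elim: m => [//|m IH] Hm /=.
rewrite IH ?(ltnW Hm) // /dbind /= /rsx_step size_map size_iota Hm /=.
rewrite -[z 1%N :: _]/(map z (iota 1 m.+1)) mulr1 -(addn1 m) iotaD map_cat cats1 add1n addn1 //.
Qed.

Lemma after_size s (z : nat -> T) m : (s <= m)%N ->
  all (fun qc => size qc.2 == s) (rsx_after R s z m).
Proof.
elim: m => [|m IH] Hm.
  by case: s Hm.
rewrite /=; apply: (@all_bind _ _ (fun B => size B == s)) => pb Hp; apply: step_size.
case: (leqP s m) => Hsm.
  by move/allP: (IH Hsm) => /(_ pb Hp) ->.
have E : s = m.+1 by apply/eqP; rewrite eqn_leq Hm.
move: Hp; rewrite after_small; last by rewrite E.
by rewrite inE => /eqP -> /=; rewrite size_map size_iota E eqxx orbT.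
Qed.

Lemma sum_count (r : seq nat) (P : pred nat) :
  \sum_(j <- r) ((P j)%:R : R) = (count P r)%:R.
Proof. elim: r => [|a r IH]; by rewrite ?big_nil // big_cons IH /= natrD. Qed.

End Proof.
Arguments Ex {R T}.

Section P2.
Variables (R : realFieldType) (T : eqType).

Lemma Ex_step_gen s t (zt : T) (B : seq T) (h : 'I_s -> T -> R) x0 :
  size B = s -> t != s.+1 ->
  Ex (rsx_step R s t zt B) (fun B' => \prod_(i < s) h i (nth x0 B' i)) =
  \prod_(i < s) ((t%:R)^-1 * h i zt + (1 - (t%:R)^-1) * h i (nth x0 B i)).
Proof.
move=> HB Ht; rewrite /rsx_step HB ltnn (negbTE Ht) /Ex big_map big_enum /=.
transitivity (\prod_(i < s) \sum_(b : bool)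
   (if b then (t%:R)^-1 * h i zt else (1 - (t%:R)^-1) * h i (nth x0 B i))); last first.
  by apply: eq_bigr => i _; rewrite big_bool.
rewrite bigA_distr_bigA /=; apply: eq_big => // m _; rewrite -big_split /=.
apply: eq_bigr => i _; rewrite nth_map_enum; case: (m i) => //=.
by rewrite (set_nth_default x0) // HB ltn_ord.
Qed.

Lemma Ex_step_first s (z : nat -> T) (h : 'I_s -> T -> R) x0 :
  Ex (rsx_step R s s.+1 (z s.+1) [seq z j | j <- iota 1 s]) (fun B' => \prod_(i < s) h i (nth x0 B' i)) =
  \prod_(i < s) ((s.+1%:R)^-1 * \sum_(j <- iota 1 s.+1) h i (z j)).
Proof.
have HL : rcons [seq z j | j <- iota 1 s] (z s.+1) = [seq z j | j <- iota 1 s.+1].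
  by rewrite -cats1 -(addn1 s) iotaD map_cat add1n addn1.
set L := rcons [seq z j | j <- iota 1 s] (z s.+1).
have HS : forall i, \sum_(j <- iota 1 s.+1) h i (z j) = \sum_(k < s.+1) h i (nth (z s.+1) L k).
  move=> i; rewrite -(big_map z xpredT) -HL (big_nth (z s.+1)) big_mkord.
  by rewrite /L size_rcons size_map size_iota.
under eq_bigr do rewrite HS.
rewrite prodrMl card_ord bigA_distr_bigA mulr_sumr.
rewrite /rsx_step size_map size_iota ltnn eqxx /Ex big_map big_enum /=.
apply: eq_big => // f _; congr (_ * _); apply: eq_bigr => i _.
by rewrite nth_map_enum.
Qed.

End P2.

Section P3.
Variables (R : realFieldType) (T : eqType).

Lemma sum_const_seq (r : seq nat) (c : R) : \sum_(j <- r) c = c *+ size r.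
Proof. elim: r => [|x r IH]; by rewrite ?big_nil // big_cons IH mulrS. Qed.

Lemma alg (m : nat) (F : nat -> R) : (0 < m)%N ->
  (m%:R)^-1 * \sum_(j <- iota 1 m) ((m.+1%:R)^-1 * F m.+1 + (1 - (m.+1%:R)^-1) * F j) =
  (m.+1%:R)^-1 * \sum_(j <- iota 1 m.+1) F j.
Proof.
move=> m0.
have Hm : (m%:R : R) != 0 by rewrite pnatr_eq0 -lt0n.
have Hm1 : (m.+1%:R : R) != 0 by rewrite pnatr_eq0.
rewrite -(addn1 m) iotaD big_cat /= big_cons big_nil addr0.
rewrite big_split /= sum_const_seq size_iota -mulr_sumr add1n addn1.
set S := \sum_(j <- iota 1 m) F j.
rewrite -[_ *+ m]mulr_natr.
move: Hm1; rewrite -addn1 natrD => Hm1.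
by field; rewrite Hm Hm1.
Qed.

Lemma main s (z : nat -> T) k (h : 'I_s -> T -> R) :
  Ex (rsx_after R s z (k + s.+1)) (fun B => \prod_(i < s) h i (nth (z 0%N) B i)) =
  \prod_(i < s) (((k + s.+1)%:R)^-1 * \sum_(j <- iota 1 (k + s.+1)) h i (z j)).
Proof.
elim: k h => [|k IH] h.
  rewrite add0n /= Ex_bind after_small // {1}/Ex big_cons big_nil /= mul1r addr0.
  exact: Ex_step_first.
rewrite addSn [rsx_after _ _ _ _]/= Ex_bind.
set t := (k + s.+1).+1.
rewrite (@Ex_eq_in _ _ _ _ (fun B => \prod_(i < s) ((t%:R)^-1 * h i (z t) + (1 - (t%:R)^-1) * h i (nth (z 0%N) B i)))); last first.
  move=> pb Hp; apply: Ex_step_gen.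
    by apply/eqP; move/allP: (@after_size R T s z _ (ltnW (leq_addl k s.+1))) => /(_ pb Hp).
  by rewrite /t eqSS; apply/negP => /eqP E; move: (leq_addl k s.+1); rewrite E ltnn.
rewrite (IH (fun i x => (t%:R)^-1 * h i (z t) + (1 - (t%:R)^-1) * h i x)).
apply: eq_bigr => i _.
rewrite /t; apply: alg; by rewrite addnS.
Qed.
End P3.

Theorem theorem19 (R : realFieldType) (T : eqType) (n s t : nat)
    (z : nat -> T) :
  (s.+2 <= t)%N -> (t <= n.+1)%N ->
  forall v : seq T, size v = s ->
    Pr (rsx_buffer R s z t) v =
    \prod_(x <- v) ((count (fun i => z i == x) (iota 1 t.-1))%:R / (t.-1)%:R).
Proof.
move=> Hst _ v Hv.
have Ht : t.-1 = ((t.-1 - s.+1) + s.+1)%N by lia.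
rewrite /rsx_buffer Ht.
move: (t.-1 - s.+1)%N => k.
have -> : Pr (rsx_after R s z (k + s.+1)) v =
    Ex (rsx_after R s z (k + s.+1)) (fun B => ((B == v) : nat)%:R).
  rewrite /Pr /Ex big_mkcond /=; apply: eq_bigr => pb _.
  by case: eqP => _; rewrite ?mulr1 ?mulr0.
rewrite (@Ex_eq_in _ _ _ _ (fun B => \prod_(i < s) ((nth (z 0%N) B i == nth (z 0%N) v i) : nat)%:R)); last first.
  move=> pb Hp; move/allP: (@after_size R T s z _ (ltnW (leq_addl k s.+1))) => /(_ pb Hp) /= /eqP HB.
  case: (boolP [exists i : 'I_s, nth (z 0%N) pb.2 i != nth (z 0%N) v i]).
    move=> /existsP [i Hi]; rewrite (bigD1 i) //= (negbTE Hi) mul0r.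
    case: eqP => // E; by rewrite E eqxx in Hi.
  rewrite negb_exists => /forallP Hall.
  have -> : pb.2 == v.
    apply/eqP; apply: (eq_from_nth (x0 := z 0%N)); first by rewrite HB Hv.
    move=> i Hi; rewrite HB in Hi; move: (Hall (Ordinal Hi)); by rewrite negbK => /eqP.
  by rewrite big1 // => i _; move: (Hall i); rewrite negbK => /eqP ->; rewrite eqxx.
rewrite (@main R T s z k (fun i x => ((x == nth (z 0%N) v i) : nat)%:R)) (big_nth (z 0%N)) Hv big_mkord; apply: eq_bigr => i _.
by rewrite mulrC sum_count.
Qed.
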